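(* In any oriented graph, a vertex of maximum score is a weak king.
   Context: An oriented graph is a digraph with no loops and no pair of symmetric arcs. For vertices $u,v$ write $u(1\text{-}0)v$ if there is an arc from $u$ to $v$, and $u(0\text{-}0)v$ if there is no arc between $u$ and $v$. If $D$ has $n$ vertices, the score of a vertex $v$ is $s(v) = n-1+d^+(v)-d^-(v)$, where $d^+(v), d^-(v)$ are the out- and indegree of $v$. A vertex $v$ is weakly reachable within two steps from $u$ if $u(1\text{-}0)v$, or $u(0\text{-}0)v$, or for some vertex $w$ one has $u(1\text{-}0)w(1\text{-}0)v$, or $u(1\text{-}0)w(0\text{-}0)v$, or $u(0\text{-}0)w(1\text{-}0)v$. A vertex $u$ of $D$ is a weak king if every other vertex of $D$ is weakly reachable within two steps from $u$. *)

(* Defs.v *)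
From mathcomp Require Import all_boot all_order all_algebra.
Set Implicit Arguments. Unset Strict Implicit. Unset Printing Implicit Defensive.
Import GRing.Theory Num.Theory.

Definition oriented (T : finType) (a : rel T) : Prop :=
  (forall u, ~~ a u u) /\ (forall u v, a u v -> ~~ a v u).

Definition outdeg (T : finType) (a : rel T) (v : T) : nat := #|[set w | a v w]|.
Definition indeg (T : finType) (a : rel T) (v : T) : nat := #|[set w | a w v]|.

Definition score (T : finType) (a : rel T) (v : T) : int :=
  ((#|T| - 1)%:Z + (outdeg a v)%:Z - (indeg a v)%:Z)%R.

Definition arc10 (T : finType) (a : rel T) (u v : T) : bool := a u v.
Definition arc00 (T : finType) (a : rel T) (u v : T) : bool := ~~ a u v && ~~ a v u.

Definition weakly_reach2 (T : finType) (a : rel T) (u v : T) : Prop :=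
  arc10 a u v \/ arc00 a u v \/
  exists w : T, (arc10 a u w && arc10 a w v) \/ (arc10 a u w && arc00 a w v)
                \/ (arc00 a u w && arc10 a w v).

Definition weak_king (T : finType) (a : rel T) (u : T) : Prop :=
  forall v : T, v != u -> weakly_reach2 a u v.

(* Main.v *)
Require Import Defs.
From Stdlib Require Import Classical.
From mathcomp Require Import zify.
From mathcomp Require Import all_boot all_order all_algebra.
Import Order.TTheory GRing.Theory Num.Theory.

Theorem theorem5 (T : finType) (a : rel T) (v : T) :
  oriented a ->
  (forall w : T, (score a w <= score a v)%R) ->
  weak_king a v.
Proof.
move=> [irr asym] Hmax x xv.
apply: NNPP => H.
have H1 : ~~ a v x by apply/negP => h; apply: H; left.
have Hxv : a x v.
  apply: NNPP => h; apply: H; right; left.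
  by rewrite /arc00 H1; apply/negP.
have Hout : forall w, a v w -> a x w.
  move=> w vw; apply: NNPP => h.
  have nwx : ~~ a w x.
    by apply/negP => wx; apply: H; right; right; exists w; left; rewrite /arc10 vw wx.
  apply: H; right; right; exists w; right; left.
  by rewrite /arc10 /arc00 vw nwx; apply/negP.
have Hin : forall w, a w x -> a w v.
  move=> w wx; apply: NNPP => h.
  have nvw : ~~ a v w.
    by apply/negP => vw; apply: H; right; right; exists w; left; rewrite /arc10 vw wx.
  apply: H; right; right; exists w; right; right.
  by rewrite /arc10 /arc00 wx nvw andbT; apply/negP.
have Co : (outdeg a v).+1 <= outdeg a x.
  rewrite /outdeg.
  have -> : (#|[set w | a v w]|).+1 = #|v |: [set w | a v w]|.
    by rewrite cardsU1 inE (negbTE (irr v)).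
  apply: subset_leq_card; apply/subsetP => w; rewrite !inE => /orP [/eqP -> //|].
  exact: Hout.
have Ci : indeg a x <= indeg a v.
  apply: subset_leq_card; apply/subsetP => w; rewrite !inE; exact: Hin.
have := Hmax x; rewrite /score.
move: Co Ci; generalize (outdeg a v) (outdeg a x) (indeg a x) (indeg a v) (#|T| - 1)%N.
move=> p q r s n h1 h2; lia.
Qed.
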